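(* Let $\mathcal{K}\subseteq\mathbb{R}\cup\{\pm\infty\}$ have nonzero Lebesgue measure, let $\varpi:\mathcal{K}\to\mathbb{R}_{\geq 0}$ be Lebesgue integrable with only countably many zeros, let $d,n,\rho\in\mathbb{N}$, let $\mathbf{f}\in\mathbb{L}^2_{\varpi}(\mathcal{K};\mathbb{R}^d)$ satisfy $\mathsf{F}^{-1}:=\int_{\mathcal{K}}\varpi(\tau)\mathbf{f}(\tau)\mathbf{f}^\top(\tau)\,d\tau\succ 0$, put $F(\tau)=\mathbf{f}(\tau)\otimes I_n$, and let $U\in\mathbb{R}^{n\times n}$ be symmetric with $U\succ 0$. Let $\mathbf{x}\in\mathbb{L}^2_{\varpi}(\mathcal{K};\mathbb{R}^n)$, $\boldsymbol{\vartheta}=\int_{\mathcal{K}}\varpi F\mathbf{x}\,d\tau$, and let $\Upsilon\in\mathbb{R}^{dn\times\rho n}$, $\mathbf{z}\in\mathbb{R}^{\rho n}$ satisfy $\Upsilon\mathbf{z}=\boldsymbol{\vartheta}$. For symmetric $Y\in\mathbb{R}^{\rho dn\times\rho dn}$ and $X=[X_1\ \cdots\ X_d]\in\mathbb{R}^{n\times\rho dn}$ ($X_i\in\mathbb{R}^{n\times\rho n}$) put $\widehat{X}=\mathrm{Col}_{i=1}^dX_i$ and $W=\int_{\mathcal{K}}\varpi(\tau)(\mathbf{f}^\top(\tau)\otimes I_{\rho n})Y(\mathbf{f}(\tau)\otimes I_{\rho n})\,d\tau$. Then for all such $X,Y$ satisfying $\begin{bmatrix}U&-X\\-X^\top&Y\end{bmatrix}\succeq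 0$, $$\mathbf{z}^\top\big[\Upsilon^\top\widehat{X}+\widehat{X}^\top\Upsilon-W\big]\mathbf{z}\;\leq\;\boldsymbol{\vartheta}^\top(\mathsf{F}\otimes U)\boldsymbol{\vartheta},$$ and equality holds for $\widehat{X}=(\mathsf{F}\otimes U)\Upsilon$ and $Y=X^\top U^{-1}X$ (which satisfy the matrix inequality). Thus the largest lower bound of the form $\mathbf{z}^\top[\Upsilon^\top\widehat{X}+\widehat{X}^\top\Upsilon-W]\mathbf{z}$ for $\int_{\mathcal{K}}\varpi\,\mathbf{x}^\top U\mathbf{x}\,d\tau$ equals the lower bound $\boldsymbol{\vartheta}^\top(\mathsf{F}\otimes U)\boldsymbol{\vartheta}$.
   Context: $\mathbb{L}^2_{\varpi}(\mathcal{K};\mathbb{R}^m)$ is the set of Lebesgue integrable functions $\phi:\mathcal{K}\to\mathbb{R}^m$ with $\int_{\mathcal{K}}\varpi\phi^\top\phi\,d\tau<\infty$. $\mathrm{Col}$ stacks blocks vertically; $\otimes$ is the Kronecker product. *)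

(* Defs.v *)
From HB Require Import structures.
From mathcomp Require Import all_boot all_order all_algebra.
From mathcomp Require Import all_classical all_reals all_analysis.
Set Implicit Arguments. Unset Strict Implicit. Unset Printing Implicit Defensive.
Import Order.TTheory GRing.Theory Num.Theory.
Local Open Scope classical_set_scope.
Local Open Scope ring_scope.

(* Index splitting 'I_(m*p) -> 'I_m * 'I_p, row-major: k = i*p + j. *)
Definition kidx (m p : nat) (k : 'I_(m * p)) : 'I_m * 'I_p :=
  enum_val (cast_ord (esym (mxvec_cast m p)) k).

Definition kron (R : pzRingType) (m n p q : nat)
  (A : 'M[R]_(m, n)) (B : 'M[R]_(p, q)) : 'M[R]_(m * p, n * q) :=
  \matrix_(a, b) (A (kidx a).1 (kidx b).1 * B (kidx a).2 (kidx b).2).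

Definition kronI (R : pzRingType) (d : nat) (v : 'cV[R]_d) (m : nat)
  : 'M[R]_(d * m, m) :=
  castmx (erefl, mul1n m) (kron v (1%:M : 'M[R]_m)).

(* Col_{i=1}^d X_i for X = [X_1 ... X_d], X_i : 'M_(n, k) *)
Definition colblocks (R : Type) (n d k : nat) (X : 'M[R]_(n, d * k))
  : 'M[R]_(d * n, k) :=
  \matrix_(a, c) X (kidx a).2 (mxvec_index (kidx a).1 c).

Definition symmx (R : Type) (m : nat) (M : 'M[R]_m) := M^T = M.

Definition psd (R : numDomainType) (m : nat) (M : 'M[R]_m) :=
  symmx M /\ forall v : 'cV[R]_m, 0 <= (v^T *m M *m v) 0 0.

Definition posdef (R : numDomainType) (m : nat) (M : 'M[R]_m) :=
  symmx M /\ forall v : 'cV[R]_m, v != 0 -> 0 < (v^T *m M *m v) 0 0.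

Definition mxint (R : realType) (m p : nat) (K : set R) (G : R -> 'M[R]_(m, p))
  : 'M[R]_(m, p) :=
  \matrix_(i, j) Rintegral lebesgue_measure K (fun t : R => G t i j).

Definition L2w (R : realType) (m : nat) (K : set R) (w : R -> R)
  (x : R -> 'cV[R]_m) :=
  (forall i, measurable_fun K (fun t => x t i 0)) /\
  lebesgue_measure.-integrable K (fun t : R => (w t * ((x t)^T *m x t) 0 0)%:E).

(* Main.v *)
Require Import Defs.
From HB Require Import structures.
From mathcomp Require Import all_boot all_order all_algebra.
From mathcomp Require Import all_classical all_reals all_analysis.
From mathcomp Require Import ring lra.
Import Order.TTheory GRing.Theory Num.Theory.
Local Open Scope classical_set_scope.
Local Open Scope ring_scope.
Set Implicit Arguments. Unset Strict Implicit.



Notation mu := (@lebesgue_measure _).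

Lemma gd_sum (R : realType) (K : set R) (mK : measurable K) (I : Type)
  (r : seq I) (g : I -> R -> R) :
  (forall i, mu.-integrable K (EFin \o g i)) ->
  mu.-integrable K (EFin \o (fun t => \sum_(i <- r) g i t)).
Proof.
move=> H.
have -> : EFin \o (fun t => \sum_(i <- r) g i t) =
          (fun t => \sum_(i <- r) (EFin \o g i) t).
  by apply: funext => t /=; rewrite sumEFin.
exact: integrable_sum.
Qed.

Lemma Rint_sum (R : realType) (K : set R) (mK : measurable K) (I : Type)
  (r : seq I) (g : I -> R -> R) :
  (forall i, mu.-integrable K (EFin \o g i)) ->
  Rintegral mu K (fun t => \sum_(i <- r) g i t) =
  \sum_(i <- r) Rintegral mu K (g i).
Proof.
move=> H; elim: r => [|i r IH].
  rewrite big_nil; under eq_Rintegral do rewrite big_nil.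
  by rewrite Rintegral_cst // mul0r.
rewrite big_cons; under eq_Rintegral do rewrite big_cons.
rewrite RintegralD //; first by rewrite IH.
exact: gd_sum.
Qed.

Lemma int_wff (R : realType) (K : set R) (w : R -> R) (d : nat)
  (f : R -> 'cV[R]_d) : measurable K -> measurable_fun K w ->
  (forall t, K t -> 0 <= w t) -> L2w K w f -> forall i j,
  mu.-integrable K (EFin \o (fun t => (w t *: (f t *m (f t)^T)) i j)).
Proof.
move=> mK mw w0 [mf intf] i j.
have E : forall t, (w t *: (f t *m (f t)^T)) i j = w t * (f t i 0 * f t j 0).
  by move=> t; rewrite !mxE big_ord1 !mxE.
under eq_fun do rewrite E.
apply: (le_integrable _ _ _ intf) => //.
  apply/measurable_realfun.measurable_EFinP; apply: measurable_realfun.measurable_funM => //.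
  exact: (measurable_realfun.measurable_funM (mf i) (mf j)).
move=> t Kt; rewrite lee_fin.
have -> : ((f t)^T *m f t) 0 0 = \sum_k f t k 0 ^+ 2.
  by rewrite mxE; apply: eq_bigr => k _; rewrite mxE expr2.
rewrite [X in _ <= X]ger0_norm; last first.
  by rewrite mulr_ge0 ?w0 // sumr_ge0 // => k _; rewrite sqr_ge0.
rewrite !normrM (ger0_norm (w0 t Kt)).
apply: ler_wpM2l; first exact: w0.
have single : forall k, f t k 0 ^+ 2 <= \sum_k f t k 0 ^+ 2.
  move=> k; rewrite (bigD1 k) //= lerDl sumr_ge0 // => l _; exact: sqr_ge0.
have [le|le] := lerP `|f t i 0| `|f t j 0|.
  apply: le_trans (single j); rewrite -real_normK ?num_real // expr2.
  by apply: ler_wpM2r.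
apply: le_trans (single i); rewrite -real_normK ?num_real // expr2.
by apply: ler_wpM2l => //; apply: ltW.
Qed.

Lemma gd_mulr (R : realType) (K : set R) (mK : measurable K) (g : R -> R) c :
  mu.-integrable K (EFin \o g) ->
  mu.-integrable K (EFin \o (fun t => g t * c)).
Proof.
move=> H.
have -> : EFin \o (fun t => g t * c) = ((EFin \o g) \* cst c%:E)%E.
  by apply: funext => t /=; rewrite EFinM.
exact: integrableZr.
Qed.

Lemma KL (R : realType) (K : set R) (w : R -> R) (d : nat)
  (f : R -> 'cV[R]_d) : measurable K -> measurable_fun K w ->
  (forall t, K t -> 0 <= w t) -> L2w K w f ->
  forall p q (Phi : 'M[R]_d -> 'M[R]_(p, q)),
  (forall a A B, Phi (a *: A + B) = a *: Phi A + Phi B) ->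
  mxint K (fun t => Phi (w t *: (f t *m (f t)^T))) =
  Phi (mxint K (fun t => w t *: (f t *m (f t)^T))).
Proof.
move=> mK mw w0 Lf p q Phi Hlin.
have Phi0 : Phi 0 = 0.
  have h := Hlin 1 0 0; rewrite scaler0 addr0 scale1r in h.
  have : Phi 0 + Phi 0 - Phi 0 = Phi 0 - Phi 0 by rewrite -h.
  by rewrite addrK subrr.
have PhiS : forall (r : seq ('I_d * 'I_d)) (c : 'I_d * 'I_d -> R) A,
    Phi (\sum_(x <- r) c x *: A x) = \sum_(x <- r) c x *: Phi (A x).
  move=> r c A; elim: r => [|x r IH]; first by rewrite !big_nil.
  by rewrite !big_cons Hlin IH.
have dec : forall M : 'M[R]_d,
    Phi M = \sum_(x : 'I_d * 'I_d) M x.1 x.2 *: Phi (delta_mx x.1 x.2).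
  move=> M; rewrite {1}(matrix_sum_delta M) pair_big /=; exact: PhiS.
apply/matrixP => a b; rewrite mxE [in RHS]dec summxE.
under eq_Rintegral do rewrite dec summxE.
rewrite Rint_sum //; last first.
  move=> x; under eq_fun do rewrite mxE.
  exact/gd_mulr/int_wff.
apply: eq_bigr => x _; rewrite [in RHS]mxE [in RHS]mxE -RintegralZr //; last exact: int_wff.
by apply: eq_Rintegral => t _; rewrite [LHS]mxE.
Qed.



Lemma kidxK m p (i : 'I_m) (j : 'I_p) : kidx (mxvec_index i j) = (i, j).
Proof. by rewrite /kidx /mxvec_index cast_ordK enum_rankK. Qed.

Lemma kidx_inj m p : injective (@kidx m p).
Proof.
move=> a b; case/mxvec_indexP: a => i j; case/mxvec_indexP: b => i' j'.
by rewrite !kidxK => -[-> ->].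
Qed.

Lemma sum_kidx (R : realType) m p (F : 'I_(m * p) -> R) :
  \sum_k F k = \sum_i \sum_j F (mxvec_index i j).
Proof.
rewrite pair_big /= (reindex (uncurry (@mxvec_index m p))) /=.
  by apply: eq_bigr => -[i j].
exact: curry_mxvec_bij.
Qed.

Lemma kidx1 m (b : 'I_m) : kidx (cast_ord (esym (mul1n m)) b) = (ord0, b).
Proof.
rewrite /kidx (enum_val_nth (ord0, b)) enumT unlock /=.
rewrite /prod_enum.
have -> : enum 'I_1 = [:: ord0].
  apply: (inj_map val_inj); rewrite val_enum_ord //.
rewrite /= cats0 (nth_map b); last by rewrite size_enum_ord.
congr pair; apply: val_inj; rewrite /= nth_enum_ord //.
Qed.

Lemma sum_delta (R : realType) n (x : 'I_n) (F : 'I_n -> R) :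
  \sum_k F k * (k == x)%:R = F x.
Proof.
rewrite (bigD1 x) //= eqxx mulr1 big1 ?addr0 // => k /negbTE ->.
by rewrite mulr0.
Qed.

Lemma kronE (R : realType) m n p q (A : 'M[R]_(m, n)) (B : 'M[R]_(p, q)) a b :
  kron A B a b = A (kidx a).1 (kidx b).1 * B (kidx a).2 (kidx b).2.
Proof. by rewrite mxE. Qed.

Lemma kronIE (R : realType) d (v : 'cV[R]_d) m a b :
  kronI v m a b = v (kidx a).1 0 * ((kidx a).2 == b)%:R.
Proof. rewrite /kronI castmxE /= cast_ord_id mxE kidx1 /= mxE; congr (v _ _ * _); exact: ord1. Qed.

Lemma kron_mul (R : realType) m n p q r s (A : 'M[R]_(m, n)) (B : 'M[R]_(p, q))
  (C : 'M[R]_(n, r)) (D : 'M[R]_(q, s)) :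
  kron A B *m kron C D = kron (A *m C) (B *m D).
Proof.
apply/matrixP => a b; rewrite mxE sum_kidx [RHS]mxE !mxE big_distrl.
apply: eq_bigr => i _; rewrite big_distrr; apply: eq_bigr => j _.
by rewrite !mxE !kidxK /= mulrACA.
Qed.

Lemma tr_kron (R : realType) m n p q (A : 'M[R]_(m, n)) (B : 'M[R]_(p, q)) :
  (kron A B)^T = kron A^T B^T.
Proof. by apply/matrixP => a b; rewrite !mxE. Qed.

Lemma kron11 (R : realType) m p :
  kron (1%:M : 'M[R]_m) (1%:M : 'M[R]_p) = 1%:M.
Proof.
apply/matrixP => a b; rewrite !mxE -natrM -(inj_eq (@kidx_inj m p)).
by case: (kidx a) => i j; case: (kidx b) => i' j'; rewrite xpair_eqE mulnb.
Qed.

Lemma kron_linl (R : realType) m n p q c (A B : 'M[R]_(m, n)) (C : 'M[R]_(p, q)) :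
  kron (c *: A + B) C = c *: kron A C + kron B C.
Proof. by apply/matrixP => a b; rewrite !mxE mulrDl mulrA. Qed.

Lemma sum_delta_gen (R : realType) n (x : 'I_n) (F : 'I_n -> R) :
  (forall k, k != x -> F k = 0) -> \sum_k F k = F x.
Proof. by move=> H; rewrite (bigD1 x) //= big1 ?addr0. Qed.

Lemma kronI_mul (R : realType) d (v v' : 'cV[R]_d) n (U : 'M[R]_n) :
  kronI v n *m U *m (kronI v' n)^T = kron (v *m v'^T) U.
Proof.
apply/matrixP => a b; rewrite mxE kronE mxE big_ord1 !mxE.
rewrite (@sum_delta_gen _ _ (kidx b).2).
  rewrite !mxE kronIE eqxx mulr1.
  rewrite (@sum_delta_gen _ _ (kidx a).2).
    by rewrite kronIE eqxx mulr1; ring.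
  by move=> k hk; rewrite kronIE eq_sym (negbTE hk) mulr0 mul0r.
move=> l hl; rewrite !mxE kronIE eq_sym (negbTE hl) mulr0. by rewrite mulr0.
Qed.

Lemma X_kronI (R : realType) d n k (X : 'M[R]_(n, d * k)) (v : 'cV[R]_d) :
  X *m kronI v k = (kronI v n)^T *m colblocks X.
Proof.
apply/matrixP => r c; rewrite !mxE !sum_kidx; apply: eq_bigr => i _.
rewrite (@sum_delta_gen _ _ c).
  rewrite (@sum_delta_gen _ _ r).
    by rewrite !mxE !kronIE !kidxK /= !eqxx !mulr1 mulrC.
  by move=> j hj; rewrite !mxE kronIE kidxK /= (negbTE hj) mulr0 mul0r.
by move=> j hj; rewrite kronIE kidxK /= (negbTE hj) mulr0 mulr0.
Qed.



Lemma posdef_unit (R : realType) m (M : 'M[R]_m) : posdef M -> M \in unitmx.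
Proof.
move=> [_ H]; rewrite unitmxE unitfE; apply/negP => /det0P [v nz Hv].
have h : v^T != 0 by rewrite trmx_eq0.
by have := H _ h; rewrite trmxK Hv mul0mx mxE ltxx.
Qed.

Lemma posdef_ge0 (R : realType) m (M : 'M[R]_m) : posdef M ->
  forall v : 'cV[R]_m, 0 <= (v^T *m M *m v) 0 0.
Proof.
move=> [_ H] v; case: (eqVneq v 0) => [->|nz]; last exact/ltW/H.
by rewrite mulmx0 mxE.
Qed.

Lemma tr11 (R : realType) (A : 'M[R]_1) : A^T = A.
Proof. by apply/matrixP => i j; rewrite mxE !ord1. Qed.

Lemma inv_sym (R : realType) m (M : 'M[R]_m) : symmx M -> symmx (invmx M).
Proof. by rewrite /symmx trmx_inv => ->. Qed.

Lemma psd_block (R : realType) n k (U : 'M[R]_n) (X : 'M[R]_(n, k)) :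
  posdef U -> psd (block_mx U (- X) (- X^T) (X^T *m invmx U *m X)).
Proof.
move=> pU; have uU := posdef_unit pU; have sU : symmx U by case: pU.
have sUi := inv_sym sU.
split.
  rewrite /symmx tr_block_mx !linearN /= trmxK sU !trmx_mul trmxK sUi.
  by rewrite mulmxA.
move=> v; rewrite -[v]vsubmxK; move: (usubmx v) (dsubmx v) => a b.
rewrite tr_col_mx mul_row_block mul_row_col.
have Hc : invmx U *m (U *m a - X *m b) = a - invmx U *m X *m b.
  by rewrite mulmxBr !mulmxA mulVmx // mul1mx.
have cT : (U *m a - X *m b)^T = a^T *m U - b^T *m X^T.
  by rewrite [LHS]linearB /= !trmx_mul sU.
have E : (a^T *m U + b^T *m - X^T) *m a + (a^T *m - X + b^T *m (X^T *m invmx U *m X)) *m b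
    = (U *m a - X *m b)^T *m (invmx U *m (U *m a - X *m b)).
  rewrite Hc cT mulmxBr !mulmxBl.
  rewrite !mulmxDl !mulmxN !mulNmx !mulmxA.
  rewrite -[a^T *m U *m invmx U]mulmxA mulmxV // mulmx1.
  by rewrite opprB [X in _ + X = _]addrC.
rewrite E; set c := (U *m a - X *m b).
have -> : c^T *m (invmx U *m c) = (invmx U *m c)^T *m U *m (invmx U *m c).
  rewrite trmx_mul sUi !mulmxA -[c^T *m invmx U *m U]mulmxA mulVmx //.
  by rewrite mulmx1.
exact: posdef_ge0.
Qed.



Definition islin (R : realType) d p q (G : 'M[R]_d -> 'M[R]_(p, q)) :=
  forall a A B, G (a *: A + B) = a *: G A + G B.

Lemma lin0 (R : realType) d p q (G : 'M[R]_d -> 'M[R]_(p, q)) :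
  islin G -> G 0 = 0.
Proof.
move=> Hlin; have h := Hlin 1 0 0; rewrite scaler0 addr0 scale1r in h.
have : G 0 + G 0 - G 0 = G 0 - G 0 by rewrite -h.
by rewrite addrK subrr.
Qed.

Lemma linZ (R : realType) d p q (G : 'M[R]_d -> 'M[R]_(p, q)) :
  islin G -> forall c A, G (c *: A) = c *: G A.
Proof.
move=> Hlin c A; have h := Hlin c A 0.
by rewrite addr0 (lin0 Hlin) addr0 in h.
Qed.

Lemma lin_kron (R : realType) d p q (C : 'M[R]_(p, q)) :
  islin (fun M : 'M[R]_d => kron M C).
Proof. by move=> a A B; rewrite kron_linl. Qed.

Lemma lin_mul (R : realType) d p q p' q' (G : 'M[R]_d -> 'M[R]_(p, q))
  (P : 'M[R]_(p', p)) (Q : 'M[R]_(q, q')) :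
  islin G -> islin (fun M => P *m G M *m Q).
Proof.
move=> Hlin a A B /=; by rewrite Hlin mulmxDr mulmxDl -scalemxAr -scalemxAl.
Qed.

Lemma lin_add (R : realType) d p q (G H : 'M[R]_d -> 'M[R]_(p, q)) :
  islin G -> islin H -> islin (fun M => G M + H M).
Proof.
by move=> hG hH a A B /=; rewrite hG hH scalerDr addrACA.
Qed.

Lemma lin_scale (R : realType) d p q (G : 'M[R]_d -> 'M[R]_(p, q)) c :
  islin G -> islin (fun M => c *: G M).
Proof.
by move=> hG a A B /=; rewrite hG scalerDr !scalerA mulrC.
Qed.

Definition PhiY (R : realType) d m (Y : 'M[R]_(d * m)) (M : 'M[R]_d) : 'M[R]_m :=
  \matrix_(a, b) \sum_k \sum_l (M (kidx k).1 (kidx l).1 *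
      ((kidx k).2 == a)%:R * ((kidx l).2 == b)%:R * Y k l).

Lemma lin_PhiY (R : realType) d m (Y : 'M[R]_(d * m)) : islin (PhiY Y).
Proof.
move=> c A B; apply/matrixP => a b; rewrite !mxE big_distrr -big_split.
apply: eq_bigr => k _; rewrite big_distrr -big_split; apply: eq_bigr => l _.
by rewrite !mxE /=; ring.
Qed.

Lemma PhiY_pt (R : realType) d m (Y : 'M[R]_(d * m)) (v : 'cV[R]_d) c :
  PhiY Y (c *: (v *m v^T)) = c *: ((kronI v m)^T *m Y *m kronI v m).
Proof.
apply/matrixP => a b; rewrite !mxE exchange_big big_distrr.
apply: eq_bigr => l _; rewrite !mxE big_distrl big_distrr.
apply: eq_bigr => k _; rewrite !mxE big_ord1 !mxE !kronIE /=.
have E0 : (ord0 : 'I_1) = 0 by apply: val_inj.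
rewrite !E0; ring.
Qed.

Lemma kronZ (R : realType) m n p q c (A : 'M[R]_(m, n)) (C : 'M[R]_(p, q)) :
  kron (c *: A) C = c *: kron A C.
Proof. by apply/matrixP => a b; rewrite !mxE mulrA. Qed.


Lemma entD (R : realType) m p (A B : 'M[R]_(m, p)) i j : (A + B) i j = A i j + B i j.
Proof. by rewrite mxE. Qed.
Lemma entN (R : realType) m p (A : 'M[R]_(m, p)) i j : (- A) i j = - A i j.
Proof. by rewrite mxE. Qed.
Lemma entB (R : realType) m p (A B : 'M[R]_(m, p)) i j : (A - B) i j = A i j - B i j.
Proof. by rewrite !mxE. Qed.
Lemma entZ (R : realType) m p (A : 'M[R]_(m, p)) c i j : (c *: A) i j = c * A i j.
Proof. by rewrite mxE. Qed.

Unset Implicit Arguments.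

Theorem theorem3 (R : realType) (K : set R) (w : R -> R) (d n rho : nat)
  (f : R -> 'cV[R]_d) (U : 'M[R]_n) (x : R -> 'cV[R]_n)
  (Ups : 'M[R]_(d * n, rho * n)) (z : 'cV[R]_(rho * n)) :
  measurable K ->
  (0 < lebesgue_measure K)%E ->
  measurable_fun K w ->
  lebesgue_measure.-integrable K (fun t => (w t)%:E) ->
  (forall t, K t -> 0 <= w t) ->
  countable [set t | K t /\ w t = 0] ->
  L2w K w f ->
  posdef (mxint K (fun t => w t *: (f t *m (f t)^T))) ->
  posdef U ->
  L2w K w x ->
  let Finv := mxint K (fun t => w t *: (f t *m (f t)^T)) in
  let F := invmx Finv in
  let theta := mxint K (fun t => w t *: (kronI (f t) n *m x t)) in
  Ups *m z = theta ->
  let W (Y : 'M[R]_(d * (rho * n))) :=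
    mxint K (fun t => w t *: ((kronI (f t) (rho * n))^T *m Y
                               *m kronI (f t) (rho * n))) in
  let lhs (X : 'M[R]_(n, d * (rho * n))) Y :=
    (z^T *m (Ups^T *m colblocks X + (colblocks X)^T *m Ups - W Y) *m z) 0 0 in
  let rhs := (theta^T *m kron F U *m theta) 0 0 in
  (forall (X : 'M[R]_(n, d * (rho * n))) (Y : 'M[R]_(d * (rho * n))),
     symmx Y ->
     psd (block_mx U (- X) (- X^T) Y) ->
     lhs X Y <= rhs) /\
  (forall X : 'M[R]_(n, d * (rho * n)),
     colblocks X = kron F U *m Ups ->
     let Y := X^T *m invmx U *m X in
     psd (block_mx U (- X) (- X^T) Y) /\ lhs X Y = rhs).
Proof.
move=> mK _ mw _ w0 _ Lf pF pU _ Finv F theta Hz W lhs rhs.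
have uF : Finv \in unitmx := posdef_unit pF.
have sFi : symmx Finv by case: pF.
have sF : symmx F := inv_sym sFi.
have FFi : F *m Finv = 1%:M by rewrite mulVmx.
have FiF : Finv *m F = 1%:M by rewrite mulmxV.
have uU : U \in unitmx := posdef_unit pU.
have sU : symmx U by case: pU.
have sUi := inv_sym sU.
have kl := KL mK mw w0 Lf.
have lhsE : forall X Y, lhs X Y =
   (theta^T *m colblocks X *m z) 0 0 + (theta^T *m colblocks X *m z) 0 0
   - (z^T *m W Y *m z) 0 0.
  move=> X Y; rewrite /lhs mulmxBr mulmxBl mulmxDr mulmxDl entB entD.
  rewrite !mulmxA -trmx_mul Hz.
  rewrite -[z^T *m (colblocks X)^T]trmx_mul -[((colblocks X *m z)^T *m Ups *m z)]mulmxA Hz.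
  by rewrite -[(colblocks X *m z)^T *m theta]tr11 trmx_mul trmxK mulmxA.
split.
  move=> X Y _ [_ HP].
  set Xh := colblocks X.
  set u := kron F (1%:M : 'M[R]_n) *m theta.
  pose Phiq := fun M : 'M[R]_d =>
    u^T *m kron M U *m u + (- 2) *: (u^T *m kron M 1%:M *m (Xh *m z))
    + z^T *m PhiY Y M *m z.
  have linq : islin Phiq.
    apply: lin_add; last exact: (lin_mul _ _ (lin_PhiY Y)).
    apply: lin_add; first exact: (lin_mul _ _ (lin_kron U)).
    exact: (lin_scale _ (lin_mul _ _ (lin_kron _))).
  have WY : W Y = PhiY Y Finv.
    rewrite /Finv -(kl _ _ _ (lin_PhiY Y)) /W.
    by congr (mxint K _); apply: funext => t; rewrite PhiY_pt.
  have ptq : forall t, Phiq (w t *: (f t *m (f t)^T)) = w t *: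
      ((col_mx ((kronI (f t) n)^T *m u) (kronI (f t) (rho * n) *m z))^T
       *m block_mx U (- X) (- X^T) Y
       *m col_mx ((kronI (f t) n)^T *m u) (kronI (f t) (rho * n) *m z)).
    move=> t; rewrite (linZ linq); congr (_ *: _).
    rewrite /Phiq -!kronI_mul; clearbody u.
    have := PhiY_pt Y (f t) 1; rewrite !scale1r => ->.
    rewrite tr_col_mx mul_row_block mul_row_col !trmx_mul trmxK mulmx1.
    rewrite !mulmxDl !mulmxN !mulNmx !mulmxA.
    rewrite -[u^T *m kronI (f t) n *m (kronI (f t) n)^T *m Xh]mulmxA -X_kronI !mulmxA.
    rewrite -[z^T *m (kronI (f t) (rho * n))^T *m X^T *m (kronI (f t) n)^T *m u]tr11.
    rewrite !trmx_mul !trmxK !mulmxA.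
    apply/matrixP => i j; rewrite !ord1 !entD !entN entZ.
    lra.
  have int0 : 0 <= (Phiq Finv) 0 0.
    rewrite /Finv -(kl _ _ _ linq) mxE.
    apply: Rintegral_ge0 => t Kt; rewrite ptq entZ.
    by apply: mulr_ge0; [exact: w0 | exact: HP].
  have PqE : Phiq Finv = theta^T *m kron F U *m theta
      + (- 2) *: (theta^T *m Xh *m z) + z^T *m W Y *m z.
    have uT : u^T = theta^T *m kron F 1%:M by rewrite /u trmx_mul tr_kron sF trmx1.
    have k1 : u^T *m kron Finv U *m u = theta^T *m kron F U *m theta.
      rewrite uT /u -[theta^T *m kron F 1%:M *m kron Finv U]mulmxA kron_mul FFi mul1mx.
      by rewrite mulmxA -[theta^T *m kron 1%:M U *m kron F 1%:M]mulmxA kron_mul mul1mx mulmx1.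
    have k2 : u^T *m kron Finv 1%:M *m (Xh *m z) = theta^T *m Xh *m z.
      by rewrite uT -[theta^T *m kron F 1%:M *m kron Finv 1%:M]mulmxA kron_mul FFi mulmx1 kron11 mulmx1 mulmxA.
    by rewrite /Phiq WY k1 k2.
  rewrite PqE !entD entZ in int0.
  rewrite (lhsE X Y) /rhs; lra.
move=> X HX Y; split; first exact: psd_block.
set Xh := colblocks X in HX *.
pose Phi4 := fun M : 'M[R]_d => Xh^T *m kron M (invmx U) *m Xh.
have WY : W Y = Phi4 Finv.
  have h := kl _ _ _ (lin_mul Xh^T Xh (lin_kron (invmx U))); simpl in h.
  rewrite /Phi4 /Finv -h /W.
  congr (mxint K _); apply: funext => t.
  rewrite kronZ -scalemxAr -scalemxAl; congr (_ *: _).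
  have e1 : X *m kronI (f t) (rho * n) = (kronI (f t) n)^T *m Xh := X_kronI X (f t).
  have e2 : (kronI (f t) (rho * n))^T *m X^T = Xh^T *m kronI (f t) n.
    by rewrite -trmx_mul e1 trmx_mul trmxK.
  rewrite -kronI_mul /Y !mulmxA e2 -mulmxA e1.
  by rewrite !mulmxA.
have Xz : Xh *m z = kron F U *m theta by rewrite HX -mulmxA Hz.
have sK : (kron F U)^T = kron F U by rewrite tr_kron sF sU.
have t1 : theta^T *m Xh *m z = theta^T *m kron F U *m theta.
  by rewrite -mulmxA Xz mulmxA.
have t2 : z^T *m Xh^T *m kron Finv (invmx U) *m Xh *m z
    = theta^T *m kron F U *m theta.
  rewrite -trmx_mul -[_ *m Xh *m z]mulmxA Xz trmx_mul sK.
  by rewrite -[_ *m kron F U *m kron Finv _]mulmxA kron_mul FFi mulmxV // kron11 mulmx1 mulmxA.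
rewrite (lhsE X Y) WY /Phi4 /rhs !mulmxA t1 t2.
lra.
Qed.
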